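(* For every even integer $k\geq 2$, there are infinitely many positive integers $n$ such that $\sum_{i=0}^{k-1} \lambda(n+i)=0$, where $\lambda$ is the Liouville function.
   Context: The Liouville function is $\lambda(n)=(-1)^{\Omega(n)}$, where $\Omega(n)$ is the number of prime factors of $n$ counted with multiplicity. *)

(* Defs.v *)
From mathcomp Require Import all_boot all_algebra.
Set Implicit Arguments. Unset Strict Implicit. Unset Printing Implicit Defensive.
Import GRing.Theory Num.Theory.
Local Open Scope ring_scope.

(* Omega n = number of prime factors of n counted with multiplicity
   (Omega 1 = 0; the value at 0 is irrelevant, as only positive n are used). *)
Definition bigOmega (n : nat) : nat := (\sum_(p <- primes n) logn p n)%N.

Definition liouville (n : nat) : int := (-1) ^+ bigOmega n.

(* Main.v *)
Require Import Defs.
From mathcomp Require Import all_boot all_order all_algebra.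
From mathcomp Require Import zify.
From Stdlib Require Import Classical.
Import Order.TTheory GRing.Theory Num.Theory.
Local Open Scope ring_scope.

Lemma bigOmegaE {n B} : (n < B)%N -> bigOmega n = (\sum_(0 <= q < B) logn q n)%N.
Proof.
move=> nB; rewrite /bigOmega -(filter_pi_of nB) big_filter big_mkcond /=.
apply: eq_bigr => q _; case: ifP => // hq.
apply/esym/eqP; rewrite eqn0Ngt logn_gt0; apply/negbT; exact: hq.
Qed.

Lemma bigOmegaM m n : (0 < m)%N -> (0 < n)%N ->
  bigOmega (m * n) = (bigOmega m + bigOmega n)%N.
Proof.
move=> m0 n0.
have hm : (m < (m * n).+1)%N by rewrite ltnS leq_pmulr.
have hn : (n < (m * n).+1)%N by rewrite ltnS leq_pmull.
rewrite (bigOmegaE (ltnSn (m * n))) (bigOmegaE hm) (bigOmegaE hn) -big_split /=.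
by apply: eq_bigr => q _; rewrite lognM.
Qed.

Lemma liouvilleM m n : (0 < m)%N -> (0 < n)%N ->
  liouville (m * n) = liouville m * liouville n.
Proof. by move=> m0 n0; rewrite /liouville bigOmegaM // exprD. Qed.

Lemma liouville_prime p : prime p -> liouville p = -1.
Proof.
move=> pp; rewrite /liouville /bigOmega primes_prime // big_seq1 logn_prime //.
by rewrite eqxx expr1.
Qed.

Lemma liouville1 : liouville 1 = 1.
Proof. by rewrite /liouville /bigOmega /= big_nil expr0. Qed.

Lemma liouville_pm n : liouville n = 1 \/ liouville n = -1.
Proof.
rewrite /liouville -signr_odd; case: (odd _); [right|left]; by rewrite ?expr1 ?expr0.
Qed.

Lemma liouville_norm n : `|liouville n| = 1.
Proof. by case: (liouville_pm n) => ->. Qed.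

Definition fB (B n : nat) : int := \sum_(0 <= d < B | (d %| n)%N) liouville d.
Definition gB (p B n : nat) : int :=
  \sum_(0 <= d < B | (d %| n)%N && ~~ (p %| d)%N) liouville d.
Definition fd n := fB n.+1 n.

Lemma fB_widen n B : (0 < n)%N -> (n < B)%N -> fB B n = fd n.
Proof.
move=> n0 nB; rewrite /fd /fB [RHS](big_nat_widen _ _ _ _ _ nB).
apply: eq_bigl => d; case dn: (d %| n)%N => //=; symmetry.
by rewrite ltnS dvdn_leq.
Qed.

Lemma sum_mult (p M : nat) (G : nat -> int) : (0 < p)%N ->
  \sum_(0 <= d < M * p | (p %| d)%N) G d = \sum_(0 <= d < M) G (d * p)%N.
Proof.
move=> p0; rewrite big_mkcond big_nat_mul; apply: eq_bigr => i _.
rewrite big_ltn ?ltn_pmul2r // (dvdn_mull i (dvdnn p)) big1_seq ?Monoid.simpm // => j /andP[_].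
rewrite mem_index_iota => /andP[lo hi]; case: ifP => // /dvdnP[c jc].
subst j; exfalso.
rewrite ltn_pmul2r // in lo; rewrite ltn_pmul2r // in hi; lia.
Qed.

Lemma fB_key p M N : prime p -> (0 < N)%N -> (N < M)%N ->
  fB (M * p)%N (N * p)%N = gB p (M * p)%N N - fB M N.
Proof.
move=> pp N0 NM; have p0 := prime_gt0 pp.
rewrite /fB /gB (bigID (fun d => (p %| d)%N)) /= addrC; congr (_ + _).
  apply: eq_bigl => d; case pd: (p %| d)%N; rewrite ?andbF ?andbT //=.
  by apply: Gauss_dvdl; rewrite coprime_sym prime_coprime // pd.
rewrite (eq_bigl (fun d => (p %| d)%N && (d %| N * p)%N)); last by move=> d; rewrite andbC.
rewrite big_mkcondr sum_mult // -sumrN [RHS]big_mkcond; apply: eq_bigr => d _.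
rewrite dvdn_pmul2r //; case: ifP => // dN.
have d0 := dvdn_gt0 N0 dN.
by rewrite liouvilleM // (liouville_prime _ pp) mulrN1.
Qed.

Lemma gB_mul (p B N : nat) : prime p -> gB p B (N * p)%N = gB p B N.
Proof.
move=> pp; apply: eq_bigl => d; case pd: (p %| d)%N; rewrite ?andbF ?andbT //=.
by apply: Gauss_dvdl; rewrite coprime_sym prime_coprime // pd.
Qed.

Lemma gB_ndvd (p B N : nat) : ~~ (p %| N)%N -> gB p B N = fB B N.
Proof.
move=> pN; apply: eq_bigl => d; case dN: (d %| N)%N; rewrite //= .
by apply/negP => pd; move/negP: pN; apply; apply: dvdn_trans pd dN.
Qed.

Lemma fd01 n : (0 < n)%N -> fd n = 0 \/ fd n = 1.
Proof.
elim: n {-2}n (leqnn n) => [|b IH] n nb n0; first by lia.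
case: (ltnP 1 n) => [n1|n1]; last first.
  have -> : n = 1%N by lia.
  by right; rewrite /fd /fB big_mkcond big_ltn // big_ltn // big_geq //= liouville1 add0r addr0.
set p := pdiv n; have pp : prime p by apply: pdiv_prime.
have p1 : (1 < p)%N by apply: prime_gt1.
set N := (n %/ p)%N; have nN : n = (N * p)%N by rewrite /N divnK // pdiv_dvd.
have N0 : (0 < N)%N by move: n0; rewrite nN; lia.
have Nn : (N < n)%N by rewrite [X in (_ < X)%N]nN; nia.
have K := fB_key p n.+1 N pp N0 (ltn_trans Nn (ltnSn n)).
have -> : fd n = fB (n.+1 * p) (N * p).
  by rewrite -nN fB_widen //; nia.
rewrite K (fB_widen N _ N0); last by lia.
case: (boolP (p %| N)%N) => pN; last by rewrite gB_ndvd // (fB_widen N _ N0) ?subrr; [left | nia].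
set N2 := (N %/ p)%N; have NN2 : N = (N2 * p)%N by rewrite /N2 divnK.
have N20 : (0 < N2)%N by move: N0; rewrite NN2; lia.
have N2N : (N2 < N)%N by rewrite [X in (_ < X)%N]NN2; nia.
have K2 := fB_key p n.+1 N2 pp N20 (ltn_trans N2N (ltn_trans Nn (ltnSn n))).
rewrite -NN2 (fB_widen N _ N0) in K2; last by nia.
rewrite (fB_widen N2 _ N20) in K2; last by lia.
have GG : gB p (n.+1 * p) N = gB p (n.+1 * p) N2 by rewrite [in LHS]NN2 gB_mul.
rewrite K2 GG opprB addrC subrK.
apply: IH => //; lia.
Qed.

Definition Asum (y : nat) : int := \sum_(1 <= d < y.+1) liouville d.
Definition Tsum (x : nat) : int := \sum_(1 <= d < x.+1) liouville d *+ (x %/ d)%N.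
Definition Dsum (x : nat) : nat := (\sum_(1 <= q < x.+1) (x %/ q))%N.

Lemma Tsum_fd x : Tsum x = \sum_(1 <= n < x.+1) fd n.
Proof.
elim: x => [|x IH]; first by rewrite /Tsum !big_geq.
rewrite big_nat_recr //= -IH /Tsum.
transitivity (\sum_(1 <= d < x.+2)
   (liouville d *+ (x %/ d)%N + liouville d *+ (d %| x.+1)%N)).
  apply: eq_big_nat => d /andP[d1 _]. rewrite divnS // mulrnDr. exact: addrC.
rewrite big_split /= [X in X + _ = _]big_nat_recr //= divn_small // mulr0n addr0.
congr (_ + _).
rewrite /fd /fB [RHS]big_ltn_cond // dvd0n /= [RHS]big_mkcond /=; apply: eq_big_nat => d _.
by rewrite mulrb.
Qed.

Lemma Tsum_A x : Tsum x = \sum_(1 <= q < x.+1) Asum (x %/ q)%N.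
Proof.
rewrite /Tsum.
transitivity (\sum_(1 <= d < x.+1) \sum_(1 <= q < x.+1) (if (q * d <= x)%N then liouville d else 0)).
  apply: eq_big_nat => d /andP[d1 dx]; rewrite -big_mkcond.
  rewrite -[LHS](_ : \sum_(1 <= q < (x %/ d).+1) liouville d = _); last first.
    by rewrite sumr_const_nat subn1.
  rewrite (big_nat_widen _ _ _ _ _ (_ : (x %/ d).+1 <= x.+1)%N) ?ltnS ?leq_div //.
  by apply: eq_bigl => q; rewrite /= ltnS leq_divRL.
rewrite exchange_big_nat /=; apply: eq_big_nat => q /andP[q1 qx].
rewrite -big_mkcond /Asum (big_nat_widen _ _ _ _ _ (_ : (x %/ q).+1 <= x.+1)%N) ?ltnS ?leq_div //.
by apply: eq_bigl => d; rewrite /= ltnS leq_divRL // mulnC.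
Qed.

Lemma Tsum_ge0 x : 0 <= Tsum x.
Proof.
rewrite Tsum_fd big_seq sumr_ge0 // => n; rewrite mem_index_iota => /andP[n1 _].
by case: (fd01 _ n1) => ->.
Qed.

Lemma Tsum_le x : Tsum x <= x%:Z.
Proof.
rewrite Tsum_fd (@le_trans _ _ (\sum_(1 <= n < x.+1) (1 : int))) //.
  apply: ler_sum_nat => n /andP[n1 _]; by case: (fd01 _ n1) => ->.
by rewrite sumr_const_nat subn1 /= -natz.
Qed.

Lemma leq_sum_nat m n (F G : nat -> nat) :
  (forall i, (m <= i < n)%N -> (F i <= G i)%N) ->
  (\sum_(m <= i < n) F i <= \sum_(m <= i < n) G i)%N.
Proof. move=> H; rewrite !big_seq; apply: leq_sum => i; rewrite mem_index_iota; exact: H. Qed.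

Lemma D_double y : (2 * Dsum y + y <= Dsum (2 * y))%N.
Proof.
rewrite /Dsum [X in (_ <= X)%N](big_cat_nat _ (n := y.+1)) //=; last by lia.
apply: leq_add.
  rewrite big_distrr /=; apply: leq_sum_nat => q /andP[q1 _].
  by rewrite leq_divRL // mulnAC -mulnA leq_mul2l mulnC leq_divM orbT.
rewrite (@leq_trans (\sum_(y.+1 <= q < (2 * y).+1) 1)) //.
  by rewrite sum_nat_const_nat; lia.
apply: leq_sum_nat => q /andP[q1 q2].
by rewrite divn_gt0; lia.
Qed.

Lemma D_pow m : (m * 2 ^ m <= 2 * Dsum (2 ^ m))%N.
Proof.
elim: m => [|m IH] //.
have := D_double (2 ^ m); rewrite expnS; nia.
Qed.

Definition Sk (k n : nat) : int := \sum_(i < k) liouville (n + i).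

Lemma A_shift k n : Asum (n + k) = Asum n + Sk k n.+1.
Proof.
rewrite /Asum (big_cat_nat _ (n := n.+1)) //=; last by lia.
congr (_ + _).
rewrite -[n.+1 in X in X = _]add0n big_addn subSS addKn big_mkord /Sk.
by apply: eq_bigr => i _; rewrite addnC.
Qed.

Lemma A_norm y : `|Asum y| <= y%:Z.
Proof.
rewrite /Asum (le_trans (ler_norm_sum _ _ _)) //.
under eq_bigr do rewrite liouville_norm.
by rewrite sumr_const_nat subn1 /= -natz.
Qed.

Lemma key_lower k N (eps : int) : (0 < k)%N -> (eps = 1 \/ eps = -1) ->
  (forall n, (N < n)%N -> 0 < eps * Sk k n) ->
  forall y, y%:Z - ((k.+1 * (N + k))%N)%:Z <= k%:Z * (eps * Asum y).
Proof.
move=> k0 he H y; elim/ltn_ind: y => y IH.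
case: (ltnP y (N + k)) => hy.
  have h1 := A_norm y.
  have h2 : - `|Asum y| <= eps * Asum y.
    case: he => ->; rewrite ?mul1r ?mulN1r.
      by rewrite lerNl -normrN ler_norm.
    by rewrite lerN2 ler_norm.
  have h3 : k%:Z * (- `|Asum y|) <= k%:Z * (eps * Asum y) by rewrite ler_wpM2l.
  have h4 : k%:Z * (- `|Asum y|) >= - (k%:Z * y%:Z).
    by rewrite mulrN lerN2 ler_wpM2l.
  have h5 : (y + k * y <= k.+1 * (N + k))%N by nia.
  lia.
have yk : y = ((y - k) + k)%N by lia.
have := IH (y - k)%N ltac:(lia).
have hS := H (y - k).+1 ltac:(lia).
rewrite [in X in _ -> X]yk A_shift mulrDr mulrDr.
move: hS; set s := eps * Sk k (y - k).+1 => hS.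
have hs : k%:Z <= k%:Z * s.
  by rewrite -{1}(mulr1 k%:Z) ler_wpM2l //; lia.
move=> h; rewrite {1}yk; lia.
Qed.

Lemma no_eventual k N (eps : int) : (0 < k)%N -> (eps = 1 \/ eps = -1) ->
  ~ (forall n, (N < n)%N -> 0 < eps * Sk k n).
Proof.
move=> k0 he H.
set C := (k.+1 * (N + k))%N.
set m := (2 * (k + C)).+1.
set x := (2 ^ m)%N.
have L := key_lower k N eps k0 he H.
have T1 : (Dsum x)%:Z - (x * C)%N%:Z <= k%:Z * (eps * Tsum x).
  rewrite Tsum_A mulr_sumr mulr_sumr.
  have -> : (Dsum x)%:Z - (x * C)%N%:Z = \sum_(1 <= q < x.+1) ((x %/ q)%N%:Z - C%:Z).
    rewrite sumrB sumr_const_nat subn1 /= /Dsum -natz natr_sum.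
    under eq_bigr do rewrite natz.
    by rewrite -mulr_natr -!natz natrM mulrC.
  apply: ler_sum_nat => q _; exact: L.
have T2 : eps * Tsum x <= x%:Z.
  have := Tsum_ge0 x; have := Tsum_le x; case: he => ->; rewrite ?mul1r ?mulN1r; lia.
have T3 : k%:Z * (eps * Tsum x) <= k%:Z * x%:Z by rewrite ler_wpM2l.
have D1 : (Dsum x <= k * x + x * C)%N.
  have T4 := le_trans T1 T3.
  rewrite -lez_nat PoszD !PoszM; rewrite PoszM in T4; lia.
have D2 := D_pow m.
have x0 : (0 < x)%N by rewrite expn_gt0.
rewrite -/x in D2.
have : (m * x <= (2 * (k + C)) * x)%N by nia.
rewrite /m; nia.
Qed.

Lemma Sk_parity k n : exists j : int, Sk k n = k%:Z - 2 * j.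
Proof.
elim: k => [|k [j IH]]; first by exists 0; rewrite /Sk big_ord0.
rewrite /Sk big_ord_recr /=.
have -> : \sum_(i < k) liouville (n + widen_ord (leqnSn k) i) = Sk k n by [].
rewrite IH; case: (liouville_pm (n + k)) => ->.
  by exists j; lia.
by exists (j + 1); lia.
Qed.

Lemma Sk_step k n : (0 < k)%N ->
  Sk k n.+1 <= Sk k n + 2 /\ Sk k n - 2 <= Sk k n.+1.
Proof.
case: k => // k _.
set M := \sum_(i < k) liouville (n.+1 + i).
have e1 : Sk k.+1 n = liouville n + M.
  rewrite /Sk big_ord_recl addn0; congr (_ + _); apply: eq_bigr => i _.
  by rewrite lift0 addnS addSn.
have e2 : Sk k.+1 n.+1 = M + liouville (n.+1 + k).
  by rewrite /Sk big_ord_recr.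
rewrite e1 e2.
case: (liouville_pm n) => ->; case: (liouville_pm (n.+1 + k)) => ->; lia.
Qed.

Lemma ivt (s : nat -> int) : (forall n, s n.+1 <= s n + 2) ->
  (forall n, s n <> 1 /\ s n <> -1) ->
  forall d a, s a <= 0 -> 0 <= s (a + d)%N ->
  exists n, (a <= n <= a + d)%N /\ s n = 0.
Proof.
move=> hstep hpar; elim => [|d IH] a h0 h1.
  by exists a; rewrite addn0 in h1; split; [lia | lia].
have [e|ne] := eqVneq (s a) 0; first by exists a; split; [lia | exact: e].
have := hpar a; have := hstep a => hs [p1 p2].
have ha : s a.+1 <= 0.
  have : s a != 0 := ne; move/eqP => ne'; lia.
have h1' : 0 <= s (a.+1 + d)%N by rewrite addSnnS.
have [n [hn sn]] := IH a.+1 ha h1'.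
by exists n; split => //; lia.
Qed.

Theorem corollary5p1 (k : nat) (hk2 : (2 <= k)%N) (hkeven : ~~ odd k) :
  forall N : nat, exists n : nat,
    (N < n)%N /\ (0 < n)%N /\ \sum_(i < k) liouville (n + i) = 0.
Proof.
move=> N.
have k0 : (0 < k)%N by lia.
have kk : k = (2 * k./2)%N by rewrite mul2n -{1}(odd_double_half k) (negbTE hkeven).
have hpar : forall n, Sk k n <> 1 /\ Sk k n <> -1.
  move=> n; have [j ->] := Sk_parity k n; rewrite kk; split; lia.
have [n1 [Hn1 S1]] : exists n, (N < n)%N /\ Sk k n <= 0.
  apply: NNPP => hne; apply: (no_eventual k N 1 k0 (or_introl erefl)) => n hn.
  rewrite mul1r ltNge; apply/negP => h; apply: hne; exists n; split => //.
have [n2 [Hn2 S2]] : exists n, (N < n)%N /\ 0 <= Sk k n.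
  apply: NNPP => hne; apply: (no_eventual k N (-1) k0 (or_intror erefl)) => n hn.
  rewrite mulN1r oppr_gt0 ltNge; apply/negP => h; apply: hne; exists n; split => //.
case: (leqP n1 n2) => h12.
  have S2' : 0 <= Sk k (n1 + (n2 - n1))%N by rewrite subnKC.
  have [n [hn sn]] := ivt (Sk k) (fun n => proj1 (Sk_step k n k0)) hpar _ _ S1 S2'.
  by exists n; split; [lia | split; [lia | exact: sn]].
have S1' : 0 <= - Sk k (n2 + (n1 - n2))%N by rewrite subnKC ?oppr_ge0 // ltnW.
have S2' : - Sk k n2 <= 0 by rewrite oppr_le0.
have step' : forall n, - Sk k n.+1 <= - Sk k n + 2.
  move=> n; have [_ h] := Sk_step k n k0; lia.
have par' : forall n, - Sk k n <> 1 /\ - Sk k n <> -1.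
  move=> n; have [h1 h2] := hpar n; split; lia.
have [n [hn sn]] := ivt (fun n => - Sk k n) step' par' _ _ S2' S1'.
exists n; split; [lia | split; [lia | ]].
by apply/eqP; rewrite -oppr_eq0; apply/eqP.
Qed.
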